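(* Let $K$ be a skew field, $V$ a left (topological) $K$-vector space with basis $v^0,v^1,\ldots$, $V'$ the dual right (topological) $K$-vector space with basis $p_0,p_1,\ldots$, with pairing $(\cdot,\cdot)$; let $\mathbf f\in V$, $\mathbf g\in V'$, and put $y_i^k=(v^k,p_i)$, $f_i=(\mathbf f,p_i)$, $g^k=(v^k,\mathbf g)$. Assume the matrix $D=(y_i^k)$ is generic. Then, with the difference derivatives defined as in the context: (a) $(\Delta_R^0 f)_i^k=f_i(y_i^k)^{-1}$, $(\Delta_R^1 f)_{ii'}^{kk'}=\big((\Delta_R^0 f)_i^k-(\Delta_R^0 f)_{i'}^k\big)\big((\Delta_R^0 y^{k'})_i^k-(\Delta_R^0 y^{k'})_{i'}^k\big)^{-1}$, and for $m\ge1$ $$(\Delta_R^m f)_{i_0\ldots i_m}^{k_0\ldots k_m}=\big((\Delta_R^{m-1}f)_{i_0\ldots i_{m-1}}^{k_0\ldots k_{m-1}}-(\Delta_R^{m-1}f)_{i_0\ldots i_{m-2}i_m}^{k_0\ldots k_{m-1}}\big)\big((\Delta_R^{m-1}y^{k_m})_{i_0\ldots i_{m-1}}^{k_0\ldots k_{m-1}}-(\Delta_R^{m-1}y^{k_m})_{i_0\ldots i_{m-2}i_m}^{k_0\ldots k_{m-1}}\big)^{-1}.$$ (b) $(\Delta_L^0 g)_i^k=(y_i^k)^{-1}g^k$, $(\Delta_L^1 g)_{ii'}^{kk'}=\big((\Delta_L^0 y_{i'})_i^k-(\Delta_L^0 y_{i'})_i^{k'}\big)^{-1}\big((\Delta_L^0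 g)_i^k-(\Delta_L^0 g)_i^{k'}\big)$, and for $m\ge1$ $$(\Delta_L^m g)_{i_0\ldots i_m}^{k_0\ldots k_m}=\big((\Delta_L^{m-1}y_{i_m})_{i_0\ldots i_{m-1}}^{k_0\ldots k_{m-1}}-(\Delta_L^{m-1}y_{i_m})_{i_0\ldots i_{m-1}}^{k_0\ldots k_{m-2}k_m}\big)^{-1}\big((\Delta_L^{m-1}g)_{i_0\ldots i_{m-1}}^{k_0\ldots k_{m-1}}-(\Delta_L^{m-1}g)_{i_0\ldots i_{m-1}}^{k_0\ldots k_{m-2}k_m}\big).$$
   Context: The pairing $(\cdot,\cdot):V\times V'\to K$ is biadditive with $(\lambda v,p\mu)=\lambda(v,p)\mu$. $D$ is the infinite matrix with entry $y_i^k$ in row $k$, column $i$; $y^k=(y_0^k,y_1^k,\ldots)$ is its $k$-th row and $y_i=(y_i^0,y_i^1,\ldots)$ its $i$-th column; $f=(f_i)$ and $g=(g^k)$. Difference derivatives: let $i_0,i_1,\ldots$ and $k_0,k_1,\ldots$ be permutations of $\{0,1,2,\ldots\}$. For generic $D$ there are unique upper triangular $A=(a_m^j)$ ($a_m^j=0$ for $j>m$) and lower triangular $C=(c_l^m)$ ($c_l^m=0$ for $l>m$) such that $q_m=\sum_{j=0}^m p_{i_j}a_m^j$ and $w^m=\sum_{l=0}^m c_l^m v^{k_l}$ satisfy $(w^m,q_{m'})=0$ for $m\neq m'$ and $(w^m,p_{i_m})=(v^{k_m},q_m)=1$. Equivalently, $q_m$ is the unique right linear combination of $p_{i_0},\ldots,p_{i_m}$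 with $(v^{k_l},q_m)=0$ for $l<m$ and $(v^{k_m},q_m)=1$, and $w^m$ is the unique left linear combination of $v^{k_0},\ldots,v^{k_m}$ with $(w^m,p_{i_j})=0$ for $j<m$ and $(w^m,p_{i_m})=1$; so these depend only on $i_0,\ldots,i_m,k_0,\ldots,k_m$. Define the $m$-th right and left difference derivatives $(\Delta_R^m f)_{i_0\ldots i_m}^{k_0\ldots k_m}=\sum_{j=0}^m f_{i_j}a_m^j=(\mathbf f,q_m)$ and $(\Delta_L^m g)_{i_0\ldots i_m}^{k_0\ldots k_m}=\sum_{l=0}^m c_l^m g^{k_l}=(w^m,\mathbf g)$; these notations are used for any sequences of pairwise distinct indices. The expression $\Delta_R^m y^{k}$ means $\Delta_R^m f$ with $f$ replaced by the row $y^k$ (i.e. $\mathbf f$ replaced by $v^k$), and $\Delta_L^m y_i$ means $\Delta_L^m g$ with $g$ replaced by the column $y_i$ (i.e. $\mathbf g$ replaced by $p_i$). Genericity means all finite square submatrices of $D$ and all elements of $K$ that need to be inverted are invertible. *)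

(* Defs.v *)
From Stdlib Require Import ClassicalEpsilon.
From HB Require Import structures.
From mathcomp Require Import all_boot all_order all_algebra.
Set Implicit Arguments. Unset Strict Implicit. Unset Printing Implicit Defensive.
Import Order.TTheory GRing.Theory.
Local Open Scope ring_scope.

Definition skew_field (K : unitRingType) : Prop :=
  forall x : K, x != 0 -> x \is a GRing.unit.

(* The matrix D is given as a function D k i = y_i^k = (v^k, p_i)
   (row k, column i).  Rows: y^k = fun i => D k i; columns: y_i = fun k => D k i. *)
Definition row_of (K : Type) (D : nat -> nat -> K) (k : nat) : nat -> K :=
  fun i => D k i.
Definition col_of (K : Type) (D : nat -> nat -> K) (i : nat) : nat -> K :=
  fun k => D k i.

Definition subD (K : Type) (D : nat -> nat -> K) (n : nat) (rs cs : seq nat)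
  : 'M[K]_n := \matrix_(l < n, j < n) D (nth 0%N rs l) (nth 0%N cs j).

Definition generic_mx (K : unitRingType) (D : nat -> nat -> K) : Prop :=
  forall (n : nat) (rs cs : seq nat), uniq rs -> uniq cs ->
    size rs = n -> size cs = n ->
    exists B : 'M[K]_n, subD D n rs cs *m B = 1%:M /\ B *m subD D n rs cs = 1%:M.

(* Coefficients a_m^j (j = 0..m) of q_m = sum_j p_{i_j} a_m^j, with
   ix = [i_0..i_m], kx = [k_0..k_m]:  (v^{k_l}, q_m) = sum_j y_{i_j}^{k_l} a^j
   = delta_{l m} for l = 0..m. *)
Definition qcoef_spec (K : unitRingType) (D : nat -> nat -> K)
  (ix kx : seq nat) (a : nat -> K) : Prop :=
  forall l : nat, (l < size kx)%N ->
    \sum_(j < size ix) D (nth 0%N kx l) (nth 0%N ix j) * a j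
      = ((l == (size kx).-1)%N)%:R.

(* Coefficients c_l^m (l = 0..m) of w^m = sum_l c_l^m v^{k_l}:
   (w^m, p_{i_j}) = sum_l c_l y_{i_j}^{k_l} = delta_{j m} for j = 0..m. *)
Definition wcoef_spec (K : unitRingType) (D : nat -> nat -> K)
  (ix kx : seq nat) (c : nat -> K) : Prop :=
  forall j : nat, (j < size ix)%N ->
    \sum_(l < size kx) c l * D (nth 0%N kx l) (nth 0%N ix j)
      = ((j == (size ix).-1)%N)%:R.

Definition qcoef (K : unitRingType) (D : nat -> nat -> K) (ix kx : seq nat)
  : nat -> K := epsilon (inhabits (fun _ => 0)) (qcoef_spec D ix kx).
Definition wcoef (K : unitRingType) (D : nat -> nat -> K) (ix kx : seq nat)
  : nat -> K := epsilon (inhabits (fun _ => 0)) (wcoef_spec D ix kx).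

Definition DeltaR (K : unitRingType) (D : nat -> nat -> K) (f : nat -> K)
  (ix kx : seq nat) : K :=
  \sum_(j < size ix) f (nth 0%N ix j) * qcoef D ix kx j.

Definition DeltaL (K : unitRingType) (D : nat -> nat -> K) (g : nat -> K)
  (ix kx : seq nat) : K :=
  \sum_(l < size kx) wcoef D ix kx l * g (nth 0%N kx l).

(* Main.v *)
Require Import Defs.
From Stdlib Require Import ClassicalEpsilon.
From HB Require Import structures.
From mathcomp Require Import all_boot all_order all_algebra.
Import GRing.Theory.
Set Implicit Arguments. Unset Strict Implicit. Unset Printing Implicit Defensive.
Local Open Scope ring_scope.

Definition Rsum (R : unitRingType) (h : nat -> R) (ix : seq nat) (a : nat -> R) :=
  \sum_(j < size ix) h (nth 0%N ix j) * a j.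

Definition injP (R : unitRingType) (E : nat -> nat -> R) : Prop :=
  forall n rs cs, uniq rs -> uniq cs -> size rs = n -> size cs = n ->
  forall c : nat -> R,
   (forall l, (l < n)%N -> \sum_(j < n) E (nth 0%N rs l) (nth 0%N cs j) * c j = 0) ->
   forall j, (j < n)%N -> c j = 0.

Definition bvec (R : unitRingType) (p : nat) (a1 a2 : nat -> R) (j : nat) : R :=
  if (j < p)%N then a1 j - a2 j else if j == p then a1 p else - a2 p.

Lemma split_sum (R : unitRingType) (h : nat -> R) I i i' a1 a2 :
  Rsum h (rcons (rcons I i) i') (bvec (size I) a1 a2) =
  Rsum h (rcons I i) a1 - Rsum h (rcons I i') a2.
Proof.
rewrite /Rsum !size_rcons !big_ord_recr /=.
rewrite !nth_rcons !size_rcons ltnn eqxx ltnSn /= ltnn eqxx.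
rewrite /bvec ltnn eqxx /= ltnNge leqnSn (gtn_eqF (ltnSn _)) /=.
have -> : \sum_(j < size I) h (nth 0%N (rcons (rcons I i) i') j) * bvec (size I) a1 a2 j
   = \sum_(j < size I) h (nth 0%N I j) * a1 j - \sum_(j < size I) h (nth 0%N I j) * a2 j.
  rewrite -sumrB; apply: eq_bigr => j _.
  by rewrite !nth_rcons size_rcons (leq_trans (ltn_ord j) (leqnSn _)) ltn_ord /bvec ltn_ord mulrBr.
have -> : \sum_(j < size I) h (nth 0%N (rcons I i) j) * a1 j = \sum_(j < size I) h (nth 0%N I j) * a1 j.
  by apply: eq_bigr => j _; rewrite nth_rcons ltn_ord.
have -> : \sum_(j < size I) h (nth 0%N (rcons I i') j) * a2 j = \sum_(j < size I) h (nth 0%N I j) * a2 j.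
  by apply: eq_bigr => j _; rewrite nth_rcons ltn_ord.
rewrite mulrN opprD !addrA; congr (_ - _).
by rewrite addrAC.
Qed.

Lemma spec_uniq (R : unitRingType) (E : nat -> nat -> R) (inj : injP E)
  ix kx a a' : uniq ix -> uniq kx -> size ix = size kx ->
  qcoef_spec E ix kx a -> qcoef_spec E ix kx a' ->
  forall j, (j < size ix)%N -> a j = a' j.
Proof.
move=> uix ukx sz ha ha' j hj; apply/eqP; rewrite -subr_eq0; apply/eqP.
apply: (inj (size kx) kx ix ukx uix erefl sz (fun j => a j - a' j)) => //; last by rewrite -sz.
move=> l hl; rewrite -sz.
under eq_bigr do rewrite mulrBr.
by rewrite sumrB ha // ha' // subrr.
Qed.

Lemma base_lemma (R : unitRingType) (hR : skew_field R) (E : nat -> nat -> R)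
  (inj : injP E) i k a h :
  qcoef_spec E [:: i] [:: k] a -> Rsum h [:: i] a = h i * (E k i)^-1.
Proof.
move=> ha.
have nz : E k i != 0.
  apply/negP => /eqP e0.
  have : (fun _ : nat => 1 : R) 0%N = 0.
    apply: (inj 1%N [:: k] [:: i] erefl erefl erefl erefl (fun _ : nat => 1 : R) _ 0%N isT).
    by move=> l hl; rewrite big_ord1 /=; case: l hl => // _; rewrite e0 mul0r.
  by move/eqP; rewrite oner_eq0.
have u := hR _ nz.
have hb : qcoef_spec E [:: i] [:: k] (fun _ => (E k i)^-1).
  by move=> l; case: l => // _; rewrite big_ord1 /= divrr.
rewrite /Rsum big_ord1 /= (spec_uniq inj _ _ _ ha hb) //.
Qed.

Lemma core (R : unitRingType) (hR : skew_field R) (E : nat -> nat -> R)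
  (inj : injP E) (I ks : seq nat) i i' km a a1 a2 h :
  uniq (rcons (rcons I i) i') -> uniq (rcons ks km) -> size ks = (size I).+1 ->
  qcoef_spec E (rcons I i) ks a1 -> qcoef_spec E (rcons I i') ks a2 ->
  qcoef_spec E (rcons (rcons I i) i') (rcons ks km) a ->
  Rsum h (rcons (rcons I i) i') a =
  (Rsum h (rcons I i) a1 - Rsum h (rcons I i') a2) *
  (Rsum (row_of E km) (rcons I i) a1 - Rsum (row_of E km) (rcons I i') a2)^-1.
Proof.
move=> uix ukx sks h1 h2 ha.
set p := size I.
set b := bvec p a1 a2.
set d := (Rsum (row_of E km) (rcons I i) a1 - Rsum (row_of E km) (rcons I i') a2).
have hA : forall l, (l < p.+1)%N -> Rsum (row_of E (nth 0%N ks l)) (rcons (rcons I i) i') b = 0.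
  move=> l hl; rewrite split_sum /Rsum /row_of.
  by rewrite h1 ?sks // h2 ?sks // subrr.
have hB : Rsum (row_of E km) (rcons (rcons I i) i') b = d by rewrite split_sum.
have hd : d != 0.
  apply/negP => /eqP d0.
  have b0 : b p = 0.
    apply: (inj p.+2 (rcons ks km) (rcons (rcons I i) i') ukx uix _ _ b _ p (ltnW (ltnSn _))); rewrite ?size_rcons ?sks //.
    move=> l hl; rewrite nth_rcons sks.
    case: ltnP => hl'.
      by have := hA l hl'; rewrite /Rsum /row_of !size_rcons.
    have -> : l = p.+1 by apply/eqP; rewrite eqn_leq hl' andbT -ltnS.
    by rewrite eqxx; have := hB; rewrite d0 /Rsum /row_of !size_rcons.
  have a1p : a1 p = 0 by move: b0; rewrite /b /bvec ltnn eqxx.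
  have uI : uniq I by move: uix; rewrite !rcons_uniq => /andP[_ /andP[]].
  have uks : uniq ks by move: ukx; rewrite rcons_uniq => /andP[].
  have a1z : forall j, (j < p)%N -> a1 j = 0.
    move=> j hj; apply: (inj p (take p ks) I (take_uniq _ uks) uI _ erefl a1 _ j hj).
      by rewrite size_takel // sks.
    move=> l hl.
    have := h1 l; rewrite sks => /(_ (ltnW hl)).
    rewrite size_rcons big_ord_recr /= nth_rcons ltnn eqxx a1p mulr0 addr0.
    rewrite (ltn_eqF hl) /= => e; rewrite -[RHS]e nth_take //.
    by apply: eq_bigr => j' _; rewrite nth_rcons ltn_ord.
  have := h1 p; rewrite sks => /(_ (ltnSn _)).
  rewrite eqxx big1 => [/eqP|j _]; first by rewrite eq_sym oner_eq0.
  rewrite size_rcons in j *.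
  case: (ltnP j p) => hj; first by rewrite a1z // mulr0.
  have -> : nat_of_ord j = p by apply/eqP; rewrite eqn_leq hj -ltnS ltn_ord.
  by rewrite a1p mulr0.
have ud := hR _ hd.
have ha' : qcoef_spec E (rcons (rcons I i) i') (rcons ks km) (fun j => b j * d^-1).
  move=> l; rewrite !size_rcons sks /= => hl.
  under eq_bigr do rewrite mulrA.
  rewrite -mulr_suml nth_rcons sks.
  case: ltnP => hl'.
    by have := hA l hl'; rewrite /Rsum /row_of !size_rcons => ->; rewrite mul0r (ltn_eqF hl').
  have -> : l = p.+1 by apply/eqP; rewrite eqn_leq hl' andbT -ltnS.
  by rewrite !eqxx; have := hB; rewrite /Rsum /row_of !size_rcons => ->; rewrite divrr.
have -> : Rsum h (rcons (rcons I i) i') a = Rsum h (rcons (rcons I i) i') (fun j => b j * d^-1).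
  apply: eq_bigr => j _; congr (_ * _).
  by apply: (spec_uniq inj uix ukx _ ha ha'); rewrite // !size_rcons sks.
by rewrite /Rsum; under eq_bigr do rewrite mulrA; rewrite -mulr_suml; congr (_ * _); exact: split_sum.
Qed.

Lemma injK (K : unitRingType) (D : nat -> nat -> K) (hD : generic_mx D) : injP D.
Proof.
move=> n rs cs urs ucs srs scs c hc j hj.
have [B [hMB hBM]] := hD n rs cs urs ucs srs scs.
pose v : 'cV[K]_n := \col_(j < n) c j.
have Mv : subD D n rs cs *m v = 0.
  apply/matrixP => l z; rewrite !mxE -[RHS](hc l (ltn_ord l)).
  by apply: eq_bigr => j' _; rewrite !mxE.
have : v = 0 by rewrite -[v]mul1mx -hBM -mulmxA Mv mulmx0.
by move/matrixP => /(_ (Ordinal hj) 0); rewrite !mxE.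
Qed.

Lemma injKc (K : unitRingType) (D : nat -> nat -> K) (hD : generic_mx D) :
  injP (R := K^c) (fun x y => D y x).
Proof.
move=> n rs cs urs ucs srs scs c hc j hj.
have [B [hMB hBM]] := hD n cs rs ucs urs scs srs.
pose u : 'rV[K]_n := \row_(j < n) c j.
have uM : u *m subD D n cs rs = 0.
  apply/matrixP => z l; rewrite !mxE -[RHS](hc l (ltn_ord l)).
  by apply: eq_bigr => j' _; rewrite !mxE.
have : u = 0 by rewrite -[u]mulmx1 -hMB mulmxA uM mul0mx.
by move/matrixP => /(_ 0 (Ordinal hj)); rewrite !mxE.
Qed.

Lemma qspec (K : unitRingType) (D : nat -> nat -> K) (hD : generic_mx D) ix kx n :
  uniq ix -> uniq kx -> size ix = n.+1 -> size kx = n.+1 ->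
  qcoef_spec D ix kx (qcoef D ix kx).
Proof.
move=> uix ukx sx sk; rewrite /qcoef; apply: epsilon_spec.
have [B [hMB _]] := hD n.+1 kx ix ukx uix sk sx.
exists (fun j => B (inord j) (inord n)).
move=> l; rewrite sx sk /= => hl.
have := congr1 (fun M : 'M_n.+1 => M (inord l) (inord n)) hMB; rewrite !mxE.
rewrite -(inj_eq val_inj) /= !inordK // => <-.
by apply: eq_bigr => j _; rewrite !mxE inord_val inordK.
Qed.

Lemma wspec (K : unitRingType) (D : nat -> nat -> K) (hD : generic_mx D) ix kx n :
  uniq ix -> uniq kx -> size ix = n.+1 -> size kx = n.+1 ->
  wcoef_spec D ix kx (wcoef D ix kx).
Proof.
move=> uix ukx sx sk; rewrite /wcoef; apply: epsilon_spec.
have [B [_ hBM]] := hD n.+1 kx ix ukx uix sk sx.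
exists (fun l => B (inord n) (inord l)).
move=> j; rewrite sx sk /= => hj.
have := congr1 (fun M : 'M_n.+1 => M (inord n) (inord j)) hBM; rewrite !mxE.
rewrite -(inj_eq val_inj) /= !inordK // eq_sym => <-.
by apply: eq_bigr => l _; rewrite !mxE inord_val inordK.
Qed.

Lemma uniq_rr2 (I : seq nat) i i' : uniq (rcons (rcons I i) i') -> uniq (rcons I i').
Proof.
by rewrite !rcons_uniq mem_rcons in_cons negb_or => /andP[/andP[_ ->] /andP[_ ->]].
Qed.
Lemma uniq_rr1 (I : seq nat) i i' : uniq (rcons (rcons I i) i') -> uniq (rcons I i).
Proof. by rewrite rcons_uniq => /andP[]. Qed.
Lemma uniq_r (I : seq nat) i : uniq (rcons I i) -> uniq I.
Proof. by rewrite rcons_uniq => /andP[]. Qed.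
Theorem theorem2 (K : unitRingType) (hK : skew_field K)
  (D : nat -> nat -> K) (f g : nat -> K) (hD : generic_mx D) :
  (* (a) right difference derivatives *)
  ((forall i k : nat,
      DeltaR D f [:: i] [:: k] = f i * (D k i)^-1)
   /\ (forall i i' k k' : nat, i != i' -> k != k' ->
      DeltaR D f [:: i; i'] [:: k; k'] =
        (DeltaR D f [:: i] [:: k] - DeltaR D f [:: i'] [:: k])
        * (DeltaR D (row_of D k') [:: i] [:: k]
           - DeltaR D (row_of D k') [:: i'] [:: k])^-1)
   /\ (forall (m : nat) (isP ksP : seq nat) (i i' km : nat),
      (1 <= m)%N -> size isP = m.-1 -> size ksP = m ->
      uniq (rcons (rcons isP i) i') -> uniq (rcons ksP km) ->
      DeltaR D f (rcons (rcons isP i) i') (rcons ksP km) =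
        (DeltaR D f (rcons isP i) ksP - DeltaR D f (rcons isP i') ksP)
        * (DeltaR D (row_of D km) (rcons isP i) ksP
           - DeltaR D (row_of D km) (rcons isP i') ksP)^-1))
  /\
  (* (b) left difference derivatives *)
  ((forall i k : nat,
      DeltaL D g [:: i] [:: k] = (D k i)^-1 * g k)
   /\ (forall i i' k k' : nat, i != i' -> k != k' ->
      DeltaL D g [:: i; i'] [:: k; k'] =
        (DeltaL D (col_of D i') [:: i] [:: k]
           - DeltaL D (col_of D i') [:: i] [:: k'])^-1
        * (DeltaL D g [:: i] [:: k] - DeltaL D g [:: i] [:: k']))
   /\ (forall (m : nat) (isP ksP : seq nat) (im k k' : nat),
      (1 <= m)%N -> size isP = m -> size ksP = m.-1 ->
      uniq (rcons isP im) -> uniq (rcons (rcons ksP k) k') ->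
      DeltaL D g (rcons isP im) (rcons (rcons ksP k) k') =
        (DeltaL D (col_of D im) isP (rcons ksP k)
           - DeltaL D (col_of D im) isP (rcons ksP k'))^-1
        * (DeltaL D g isP (rcons ksP k) - DeltaL D g isP (rcons ksP k')))).
Proof.
have injD := injK hD.
have injDc := injKc hD.
have hKc : skew_field K^c by move=> x; exact: hK.
have a3 : forall (m : nat) (isP ksP : seq nat) (i i' km : nat),
      (1 <= m)%N -> size isP = m.-1 -> size ksP = m ->
      uniq (rcons (rcons isP i) i') -> uniq (rcons ksP km) ->
      DeltaR D f (rcons (rcons isP i) i') (rcons ksP km) =
        (DeltaR D f (rcons isP i) ksP - DeltaR D f (rcons isP i') ksP)
        * (DeltaR D (row_of D km) (rcons isP i) ksP
           - DeltaR D (row_of D km) (rcons isP i') ksP)^-1.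
  move=> m isP ksP i i' km hm sI sK uix ukx.
  have sks : size ksP = (size isP).+1 by rewrite sI sK; case: (m) hm.
  have uk := uniq_r ukx.
  have s1 : size (rcons (rcons isP i) i') = (size isP).+2 by rewrite !size_rcons.
  have s2 : size (rcons ksP km) = (size isP).+2 by rewrite size_rcons sks.
  exact: (core hK injD f uix ukx sks (qspec hD (uniq_rr1 uix) uk (size_rcons _ _) sks)
     (qspec hD (uniq_rr2 uix) uk (size_rcons _ _) sks)
     (qspec hD uix ukx s1 s2)).
have b3 : forall (m : nat) (isP ksP : seq nat) (im k k' : nat),
      (1 <= m)%N -> size isP = m -> size ksP = m.-1 ->
      uniq (rcons isP im) -> uniq (rcons (rcons ksP k) k') ->
      DeltaL D g (rcons isP im) (rcons (rcons ksP k) k') =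
        (DeltaL D (col_of D im) isP (rcons ksP k)
           - DeltaL D (col_of D im) isP (rcons ksP k'))^-1
        * (DeltaL D g isP (rcons ksP k) - DeltaL D g isP (rcons ksP k')).
  move=> m isP ksP im k k' hm sI sK uix ukx.
  have sks : size isP = (size ksP).+1 by rewrite sI sK; case: (m) hm.
  have ui := uniq_r uix.
  have s2 : size (rcons (rcons ksP k) k') = (size ksP).+2 by rewrite !size_rcons.
  have s1 : size (rcons isP im) = (size ksP).+2 by rewrite size_rcons sks.
  exact: (core hKc injDc g ukx uix sks (wspec hD ui (uniq_rr1 ukx) sks (size_rcons _ _))
     (wspec hD ui (uniq_rr2 ukx) sks (size_rcons _ _))
     (wspec hD uix ukx s1 s2)).
split; split.
- move=> i k; exact: (base_lemma hK injD f (qspec hD (ix:=[::i]) (kx:=[::k]) (n:=0) isT isT erefl erefl)).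
- split.
    move=> i i' k k' hi hk; apply: (a3 1%N [::] [:: k]) => //=; by rewrite ?andbT ?inE.
  exact: a3.
- move=> i k; exact: (base_lemma hKc injDc g (wspec hD (ix:=[::i]) (kx:=[::k]) (n:=0) isT isT erefl erefl)).
- split.
    move=> i i' k k' hi hk; apply: (b3 1%N [:: i] [::]) => //=; by rewrite ?andbT ?inE.
  exact: b3.
Qed.
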